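(* Let $a>0$, $k\ne0$, $\alpha=\arctan k$, and let $S_{a,k}=\{(r\cos\varphi,r\sin\varphi)\in\mathbb{R}^2: r=ae^{k\varphi},\ \varphi\in\mathbb{R}\}$ be the logarithmic spiral. Then $\mathrm{Ent}[S_{a,k}]\le 1/|\sin\alpha|<\infty$.
   Context: For a curve $\Gamma$, $F_{x_0,\lambda}[\Gamma]=\frac{1}{\sqrt{4\pi\lambda}}\int_\Gamma e^{-|x-x_0|^2/(4\lambda)}\,ds$ ($ds$ arc length) and $\mathrm{Ent}[\Gamma]=\sup_{x_0\in\mathbb{R}^2,\lambda>0}F_{x_0,\lambda}[\Gamma]$. *)

(* Defs.v *)
From HB Require Import structures.
From mathcomp Require Import all_boot all_order all_algebra.
From mathcomp Require Import all_classical all_reals all_analysis.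
Set Implicit Arguments. Unset Strict Implicit. Unset Printing Implicit Defensive.
Import Order.TTheory GRing.Theory Num.Theory.
Import numFieldNormedType.Exports.
Local Open Scope classical_set_scope.
Local Open Scope ring_scope.

Section Defs.
Variable R : realType.

Definition sqdist (p q : R * R) : R := (p.1 - q.1) ^+ 2 + (p.2 - q.2) ^+ 2.

Definition speed (g : R -> R * R) (t : R) : R :=
  Num.sqrt (derive1 (fun s => (g s).1) t ^+ 2 + derive1 (fun s => (g s).2) t ^+ 2).

(* F_{x0,lam}[Gamma] = (4 pi lam)^{-1/2} \int_Gamma exp(-|x-x0|^2/(4 lam)) ds,
   with Gamma = g(R) and ds = |g'(t)| dt (Lebesgue integral over R). *)
Definition Fcurve (g : R -> R * R) (x0 : R * R) (lam : R) : \bar R :=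
  (\int[@lebesgue_measure R]_(t in [set: R])
     ((Num.sqrt (4 * pi * lam))^-1 * expR (- sqdist (g t) x0 / (4 * lam))
        * speed g t)%:E)%E.

Definition Ent (g : R -> R * R) : \bar R :=
  ereal_sup [set y | exists x0 : R * R, exists lam : R, 0 < lam /\ y = Fcurve g x0 lam].

Definition spiral (a k : R) (phi : R) : R * R :=
  (a * expR (k * phi) * cos phi, a * expR (k * phi) * sin phi).

End Defs.

(* Main.v *)
Require Import Defs.
From HB Require Import structures.
From mathcomp Require Import all_boot all_order all_algebra.
From mathcomp Require Import all_classical all_reals all_analysis.
From mathcomp Require Import lra ring measurable_realfun.
Import Order.TTheory GRing.Theory Num.Theory.
Import numFieldNormedType.Exports.
Local Open Scope classical_set_scope.
Local Open Scope ring_scope.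
Section S.
Variable R : realType.

Lemma is_derive_cont (f : R -> R) (x df : R) : is_derive x 1 f df -> {for x, continuous f}.
Proof. by move=> H; apply/differentiable_continuous/derivable1_diffP; exact: ex_derive. Qed.

Lemma is_derive_ext (f g : R -> R) (x df df' : R) :
  f = g -> is_derive x 1 f df -> df = df' -> is_derive x 1 g df'.
Proof. by move=> -> ? <-. Qed.

Lemma dlin (k x : R) : is_derive x 1 (fun s : R => k * s) k.
Proof.
have := @is_deriveZ R R R id k x 1 1 (is_derive_id x 1).
by rewrite /GRing.scale /= mulr1.
Qed.

Lemma dr (a k x : R) : is_derive x 1 (fun s : R => a * expR (k * s)) (k * (a * expR (k * x))).
Proof.
have h := (@is_derive1_comp R expR (fun s => k * s) x (expR (k*x)) k (is_derive_expR _) (dlin k x)).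
have h2 := is_deriveM (is_derive_cst a x 1) h.
apply: is_derive_ext h2 _.
  by apply/funext => s.
rewrite /GRing.scale /= mulr0 addr0.
rewrite [RHS]mulrC mulrA //.
Qed.

Lemma dcos (a k x : R) : is_derive x 1 (fun s => a * expR (k * s) * cos s)
   (a * expR (k * x) * (k * cos x - sin x)).
Proof.
apply: is_derive_ext (is_deriveM (dr a k x) (is_derive_cos x)) _.
  by apply/funext => s.
rewrite /GRing.scale /=.
change (a * expR (k * x) * - sin x + cos x * (k * (a * expR (k * x))) =
 a * expR (k * x) * (k * cos x - sin x) :> R); ring.
Qed.

Lemma dsin (a k x : R) : is_derive x 1 (fun s => a * expR (k * s) * sin s)
   (a * expR (k * x) * (k * sin x + cos x)).
Proof.
apply: is_derive_ext (is_deriveM (dr a k x) (is_derive_sin x)) _.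
  by apply/funext => s.
rewrite /GRing.scale /=.
change (a * expR (k * x) * cos x + sin x * (k * (a * expR (k * x))) =
 a * expR (k * x) * (k * sin x + cos x) :> R); ring.
Qed.

Lemma speed_spiral (a k x : R) : 0 < a ->
  speed (spiral a k) x = Num.sqrt (1 + k ^+ 2) * (a * expR (k * x)).
Proof.
move=> a0.
rewrite /speed.
have -> : derive1 (fun s => (spiral a k s).1) x = a * expR (k * x) * (k * cos x - sin x).
  by rewrite derive1E; apply: derive_val; exact: dcos.
have -> : derive1 (fun s => (spiral a k s).2) x = a * expR (k * x) * (k * sin x + cos x).
  by rewrite derive1E; apply: derive_val; exact: dsin.
have r0 : 0 <= a * expR (k * x) by rewrite mulr_ge0 ?expR_ge0 ?ltW.
set r := a * expR (k * x).
have -> : (r * (k * cos x - sin x)) ^+ 2 + (r * (k * sin x + cos x)) ^+ 2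
   = (1 + k ^+ 2) * r ^+ 2.
  have h := cos2Dsin2 x.
  transitivity ((1 + k ^+ 2) * r ^+ 2 * (cos x ^+ 2 + sin x ^+ 2)); first ring.
  by rewrite h mulr1.
by rewrite sqrtrM ?addr_ge0 ?sqr_ge0 // sqrtr_sqr ger0_norm.
Qed.

Lemma sqdist_ge (a k x : R) (x0 : R * R) : 0 < a ->
  (a * expR (k * x) - Num.sqrt (x0.1 ^+ 2 + x0.2 ^+ 2)) ^+ 2 <= sqdist (spiral a k x) x0.
Proof.
move=> a0.
have r0 : 0 <= a * expR (k * x) by rewrite mulr_ge0 ?expR_ge0 ?ltW.
rewrite /sqdist /spiral /=.
set r := a * expR (k * x).
case: x0 => p q /=.
set rho := Num.sqrt _.
have rho0 : 0 <= rho by apply: sqrtr_ge0.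
have rho2 : rho ^+ 2 = p ^+ 2 + q ^+ 2 by rewrite sqr_sqrtr // addr_ge0 ?sqr_ge0.
have cs := cos2Dsin2 x.
have cauchy : (p * cos x + q * sin x) ^+ 2 <= p ^+ 2 + q ^+ 2.
  have -> : p ^+ 2 + q ^+ 2 = (p * cos x + q * sin x) ^+ 2 + (p * sin x - q * cos x) ^+ 2.
    rewrite -[LHS]mulr1 -cs; ring.
  by rewrite lerDl sqr_ge0.
have t_le : p * cos x + q * sin x <= rho.
  set t := p * cos x + q * sin x.
  case: (lerP t rho) => // H; exfalso.
  have : rho ^+ 2 < t ^+ 2 by nra.
  by rewrite rho2 ltNge cauchy.
have -> : (r * cos x - p) ^+ 2 + (r * sin x - q) ^+ 2 =
   r ^+ 2 * (cos x ^+ 2 + sin x ^+ 2) - 2 * r * (p * cos x + q * sin x) + (p ^+ 2 + q ^+ 2).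
  ring.
rewrite cs -rho2.
have : 0 <= r * (rho - (p * cos x + q * sin x)) by rewrite mulr_ge0 // subr_ge0.
nra.
Qed.

Lemma sin_atan (k : R) : sin (atan k) = k / Num.sqrt (1 + k ^+ 2).
Proof.
have c0 : cos (atan k) != 0 by rewrite cos_atan invr_eq0 gt_eqF // sqrtr_gt0 ltr_pwDl ?sqr_ge0.
have := atanK k; rewrite /tan => h.
by rewrite -{2}h -cos_atan mulfVK.
Qed.

Lemma cont_r (c k : R) : continuous (fun x : R => c * expR (k * x)).
Proof. by move=> x; apply: is_derive_cont (dr c k x). Qed.

Lemma dF (a k rho s x : R) : is_derive x 1 (fun t : R => (a * expR (k * t) - rho) / s)
  (k * a / s * expR (k * x)).
Proof.
have h := is_deriveM (is_deriveB (dr a k x) (is_derive_cst rho x 1)) (is_derive_cst s^-1 x 1).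
apply: is_derive_ext h _.
  by apply/funext => t.
rewrite /GRing.scale /=.
change ((a * expR (k * x) - rho) * 0 + s^-1 * (k * (a * expR (k * x)) - 0) =
  k * a / s * expR (k * x) :> R); ring.
Qed.

Lemma F'E (a k rho s : R) : derive1 (fun t : R => (a * expR (k * t) - rho) / s)
  = (fun x => k * a / s * expR (k * x)).
Proof. by apply/funext => x; rewrite derive1E; apply: derive_val; exact: dF. Qed.


Lemma intG_itv_pos (a k rho s i : R) : 0 < a -> 0 < k -> 0 < s -> 0 <= i ->
  (\int[@lebesgue_measure R]_(x in `[(- i)%R, i])
     (gauss_fun ((a * expR (k * x) - rho) / s) * (`|k| * (a * expR (k * x)) / s))%R%:E
   <= (Num.sqrt pi)%:E)%E.
Proof.
move=> a0 k0 s0 i0.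
have hi : -i <= i by lra.
rewrite (_ : (\int[@lebesgue_measure R]_(x in `[(- i)%R, i]) _)%E =
  (\int[@lebesgue_measure R]_(x in `[(- i)%R, i])
     (((gauss_fun \o (fun t : R => (a * expR (k * t) - rho) / s)) *
        derive1 (fun t : R => (a * expR (k * t) - rho) / s)) x)%R%:E)%E); last first.
  apply: eq_integral => x _; congr EFin; rewrite F'E /=.
  rewrite gtr0_norm //.
  change (gauss_fun ((a * expR (k * x) - rho) / s) * (k * (a * expR (k * x)) / s) =
    gauss_fun ((a * expR (k * x) - rho) / s) * (k * a / s * expR (k * x))).
  congr (_ * _); ring.
rewrite -integration_by_substitution_increasing //.
- rewrite -integralT_gauss; apply: ge0_subset_integral => //=.
  + by apply/measurable_EFinP; exact: measurable_gauss_fun.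
  + by move=> x _; rewrite lee_fin; exact: gauss_fun_ge0.
- move=> x y _ _ xy.
  by rewrite ltr_pM2r ?invr_gt0 // ltrD2r ltr_pM2l // ltr_expR ltr_pM2l.
- by rewrite F'E => x _; exact: cont_r.
- by rewrite F'E; apply/cvg_ex; eexists; apply: cvg_at_right_filter; exact: cont_r.
- by rewrite F'E; apply/cvg_ex; eexists; apply: cvg_at_left_filter; exact: cont_r.
- split.
  + by move=> x _; have H := dF a k rho s x; exact: ex_derive.
  + by apply: cvg_at_right_filter; exact: is_derive_cont (dF a k rho s _).
  + by apply: cvg_at_left_filter; exact: is_derive_cont (dF a k rho s _).
- by apply: continuous_subspaceT; exact: continuous_gauss_fun.
Qed.

Lemma intG_itv_neg (a k rho s i : R) : 0 < a -> k < 0 -> 0 < s -> 0 <= i ->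
  (\int[@lebesgue_measure R]_(x in `[(- i)%R, i])
     (gauss_fun ((a * expR (k * x) - rho) / s) * (`|k| * (a * expR (k * x)) / s))%R%:E
   <= (Num.sqrt pi)%:E)%E.
Proof.
move=> a0 k0 s0 i0.
have hi : -i <= i by lra.
rewrite (_ : (\int[@lebesgue_measure R]_(x in `[(- i)%R, i]) _)%E =
  (\int[@lebesgue_measure R]_(x in `[(- i)%R, i])
     (((gauss_fun \o (fun t : R => (a * expR (k * t) - rho) / s)) *
        - derive1 (fun t : R => (a * expR (k * t) - rho) / s)) x)%R%:E)%E); last first.
  apply: eq_integral => x _; congr EFin; rewrite F'E /=.
  rewrite ltr0_norm //.
  change (gauss_fun ((a * expR (k * x) - rho) / s) * (- k * (a * expR (k * x)) / s) =
    gauss_fun ((a * expR (k * x) - rho) / s) * - (k * a / s * expR (k * x))).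
  congr (_ * _); ring.
rewrite -integration_by_substitution_decreasing //.
- rewrite -integralT_gauss; apply: ge0_subset_integral => //=.
  + by apply/measurable_EFinP; exact: measurable_gauss_fun.
  + by move=> x _; rewrite lee_fin; exact: gauss_fun_ge0.
- move=> x y _ _ xy.
  by rewrite ltr_pM2r ?invr_gt0 // ltrD2r ltr_pM2l // ltr_expR ltr_nM2l.
- by rewrite F'E => x _; exact: cont_r.
- by rewrite F'E; apply/cvg_ex; eexists; apply: cvg_at_right_filter; exact: cont_r.
- by rewrite F'E; apply/cvg_ex; eexists; apply: cvg_at_left_filter; exact: cont_r.
- split.
  + by move=> x _; have H := dF a k rho s x; exact: ex_derive.
  + by apply: cvg_at_right_filter; exact: is_derive_cont (dF a k rho s _).
  + by apply: cvg_at_left_filter; exact: is_derive_cont (dF a k rho s _).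
- by apply: continuous_subspaceT; exact: continuous_gauss_fun.
Qed.

Lemma contG (a k rho s : R) : continuous (fun x => gauss_fun ((a * expR (k * x) - rho) / s) *
    (`|k| * (a * expR (k * x)) / s)).
Proof.
  move=> x.
  have c1 : {for x, continuous (fun x => gauss_fun ((a * expR (k * x) - rho) / s))}.
    apply: (@continuous_comp _ _ _ (fun x => (a * expR (k * x) - rho) / s) gauss_fun x).
      exact: is_derive_cont (dF a k rho s x).
    exact: continuous_gauss_fun.
  have c2 : {for x, continuous (fun x => `|k| * (a * expR (k * x)) / s)}.
    rewrite (_ : (fun x => _) = (fun x => (`|k| / s * a) * expR (k * x))).
      exact: cont_r.
    by apply/funext => y; ring.
  exact: (@continuousM R R _ _ x c1 c2).
Qed.

Lemma intG (a k rho s : R) : 0 < a -> k != 0 -> 0 < s ->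
  (\int[@lebesgue_measure R]_(x in [set: R])
     (gauss_fun ((a * expR (k * x) - rho) / s) * (`|k| * (a * expR (k * x)) / s))%R%:E
   <= (Num.sqrt pi)%:E)%E.
Proof.
move=> a0 kn0 s0.
have cg := contG a k rho s.
have g0 : forall x, (0 <= gauss_fun ((a * expR (k * x) - rho) / s) *
    (`|k| * (a * expR (k * x)) / s))%R.
  move=> x; apply: mulr_ge0; first exact: gauss_fun_ge0.
  apply: mulr_ge0; last by rewrite invr_ge0 ltW.
  apply: mulr_ge0 => //; apply: mulr_ge0; [exact: ltW | exact: expR_ge0].
have H : ((\int[@lebesgue_measure R]_(x in `[(- n%:R : R)%R, (n%:R : R)])
     (gauss_fun ((a * expR (k * x) - rho) / s) * (`|k| * (a * expR (k * x)) / s))%R%:E)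
   @[n --> \oo] -->
   \int[@lebesgue_measure R]_(x in \bigcup_n `[(- n%:R : R)%R, (n%:R : R)]%classic)
     (gauss_fun ((a * expR (k * x) - rho) / s) * (`|k| * (a * expR (k * x)) / s))%R%:E)%E.
  apply: ge0_nondecreasing_set_cvg_integral.
  - move=> n m nm; rewrite subsetEset; apply: subset_itv; rewrite bnd_simp ?lerN2 ler_nat //.
  - by move=> n; exact: measurable_itv.
  - move=> n; apply/measurable_EFinP; apply: measurable_funTS.
    exact: continuous_measurable_fun cg.
  - by move=> n x _; rewrite lee_fin; exact: g0.
rewrite (_ : \bigcup_n _ = [set: R]) in H; last first.
  apply/seteqP; split => // x _; exists (Num.trunc `|x|).+1 => //=.
  by rewrite in_itv /= -ler_norml; apply/ltW; exact: truncnS_gt.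
rewrite -(cvg_lim _ H) //; apply: lime_le.
  by apply/cvg_ex; eexists; exact: H.
apply: nearW => n.
move: kn0; rewrite neq_lt => /orP [kneg|kpos].
  exact: intG_itv_neg.
exact: intG_itv_pos.
Qed.

Lemma contM (f g : R -> R) : continuous f -> continuous g -> continuous (fun x => f x * g x).
Proof. by move=> cf cg x; exact: (@continuousM R R f g x (cf x) (cg x)). Qed.
Lemma contD (f g : R -> R) : continuous f -> continuous g -> continuous (fun x => f x + g x).
Proof. by move=> cf cg x; exact: (@continuousD R R R f g x (cf x) (cg x)). Qed.
Lemma contN (f : R -> R) : continuous f -> continuous (fun x => - f x).
Proof. by move=> cf x; exact: (@continuousN R R R f x (cf x)). Qed.
Lemma contC (c : R) : continuous (fun _ : R => c).
Proof. exact: cst_continuous. Qed.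
Lemma contcomp (f g : R -> R) : continuous f -> continuous g -> continuous (fun x => g (f x)).
Proof. by move=> cf cg x; exact: (@continuous_comp _ _ _ f g x (cf x) (cg (f x))). Qed.

Lemma cont_sqdist (a k : R) (x0 : R * R) :
  continuous (fun x => sqdist (spiral a k x) x0).
Proof.
have -> : (fun x => sqdist (spiral a k x) x0) =
  (fun x => (a * expR (k * x) * cos x + - x0.1) * (a * expR (k * x) * cos x + - x0.1)
          + (a * expR (k * x) * sin x + - x0.2) * (a * expR (k * x) * sin x + - x0.2)).
  by apply/funext => x; rewrite /sqdist /spiral /= !expr2.
have c1 : continuous (fun x => a * expR (k * x) * cos x) by move=> x; exact: is_derive_cont (dcos a k x).
have c2 : continuous (fun x => a * expR (k * x) * sin x) by move=> x; exact: is_derive_cont (dsin a k x).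
by apply: contD; apply: contM; apply: contD => //; apply: contC.
Qed.
End S.

Theorem propositionA1 (R : realType) (a k : R) :
  0 < a -> k != 0 ->
  (Ent (spiral a k) <= (`|sin (atan k)|)^-1%:E)%E.
Proof.
move=> a0 kn0.
rewrite /Ent; apply: ub_ereal_sup => y [x0 [lam [lam0 ->]]].
rewrite /Fcurve.
set rho := Num.sqrt (x0.1 ^+ 2 + x0.2 ^+ 2).
set s := 2 * Num.sqrt lam.
set K := Num.sqrt (1 + k ^+ 2).
set c := (Num.sqrt (4 * pi * lam))^-1.
set M0 := K / (`|k| * Num.sqrt pi).
have s0 : 0 < s.
  by apply: mulr_gt0 => //; rewrite sqrtr_gt0.
have K0 : 0 < K by rewrite /K sqrtr_gt0 ltr_pwDl ?sqr_ge0.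
have pi0 : 0 < Num.sqrt (pi : R) by rewrite sqrtr_gt0 pi_gt0.
have k0 : 0 < `|k| by rewrite normr_gt0.
have M00 : 0 <= M0 by apply/ltW/divr_gt0 => //; apply: mulr_gt0.
have c0 : 0 <= c by rewrite /c invr_ge0 sqrtr_ge0.
have s2 : s ^+ 2 = 4 * lam.
  by rewrite /s exprMn sqr_sqrtr ?ltW //; congr (_ * _); rewrite expr2 -natrM.
have sqE : Num.sqrt (4 * pi * lam) = Num.sqrt pi * s.
  rewrite -[in LHS]mulrA [pi * lam]mulrC mulrA -s2 sqrtrM ?sqr_ge0 // sqrtr_sqr ger0_norm ?ltW //.
  by rewrite [in LHS]mulrC.
have spE x : speed (spiral a k) x = K * (a * expR (k * x)) by exact: speed_spiral.
apply: (@le_trans _ _ (\int[@lebesgue_measure R]_(x in [set: R])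
   (M0 * (gauss_fun ((a * expR (k * x) - rho) / s) * (`|k| * (a * expR (k * x)) / s)))%:E)%E).
  apply: ge0_le_integral => //.
  - move=> x _; rewrite lee_fin spE.
    apply: mulr_ge0; first by apply: mulr_ge0 => //; exact: expR_ge0.
    by apply: mulr_ge0; [exact: ltW | apply: mulr_ge0; [exact: ltW | exact: expR_ge0]].
  - apply/measurable_EFinP.
    rewrite (_ : (fun x => _) = (fun x => c * expR (- sqdist (spiral a k x) x0 / (4 * lam))
       * (K * (a * expR (k * x))))); last by apply/funext => x; rewrite spE.
    apply: continuous_measurable_fun.
    apply: contM; last by apply: contM; [exact: contC | exact: cont_r].
    apply: contM; first exact: contC.
    apply: contcomp; last exact: continuous_expR.
    by apply: contM; [apply: contN; exact: cont_sqdist | exact: contC].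
  - apply/measurable_EFinP; apply: continuous_measurable_fun.
    by apply: contM; [exact: contC | exact: contG].
  - move=> x _; rewrite lee_fin spE.
    set r := a * expR (k * x).
    have r0 : 0 <= r by apply: mulr_ge0; [exact: ltW | exact: expR_ge0].
    have il : 0 < (4 * lam)^-1 by rewrite invr_gt0 mulr_gt0.
    have hE : expR (- sqdist (spiral a k x) x0 / (4 * lam)) <= gauss_fun ((r - rho) / s).
      rewrite /gauss_fun ler_expR expr_div_n s2 -mulNr ler_pM2r // lerN2.
      exact: sqdist_ge.
    apply: (le_trans (y := c * gauss_fun ((r - rho)/s) * (K * r))).
      apply: ler_wpM2r; first by apply: mulr_ge0 => //; exact: ltW.
      by apply: ler_wpM2l.
    rewrite le_eqVlt; apply/orP; left; apply/eqP.
    rewrite /c sqE /M0; field.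
    by rewrite (gt_eqF s0) (gt_eqF pi0) (gt_eqF k0).
have G0 : forall x, 0 <= gauss_fun ((a * expR (k * x) - rho) / s) * (`|k| * (a * expR (k * x)) / s).
  move=> x; apply: mulr_ge0; first exact: gauss_fun_ge0.
  apply: mulr_ge0; last by rewrite invr_ge0 ltW.
  apply: mulr_ge0; [exact: ltW | apply: mulr_ge0; [exact: ltW | exact: expR_ge0]].
under eq_integral do rewrite EFinM.
rewrite ge0_integralZl_EFin //; first last.
- by apply/measurable_EFinP; apply: continuous_measurable_fun; exact: contG.
- by move=> x _; rewrite lee_fin.
apply: (le_trans (y := (M0%:E * (Num.sqrt (pi : R))%:E)%E)).
  apply: lee_pmul.
  - by rewrite lee_fin.
  - by apply: integral_ge0 => x _; rewrite lee_fin.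
  - exact: lexx.
  - exact: (@intG R a k rho s a0 kn0 s0).
rewrite -EFinM lee_fin sin_atan -/K normrM normfV (gtr0_norm K0) /M0.
rewrite le_eqVlt; apply/orP; left; apply/eqP; field.
by rewrite (gt_eqF K0) (gt_eqF pi0) (gt_eqF k0).
Qed.
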